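(* Every finite groupoid $\langle A;\cdot\rangle$ with an identity element which is an Abelian algebra is a Hamiltonian algebra.
   Context: A groupoid is an algebra $\langle A;\cdot\rangle$ with one binary operation (its subalgebras are the nonempty subsets closed under $\cdot$); an identity element is $1\in A$ with $1\cdot a=a\cdot 1=a$ for all $a$. A polynomial operation of an algebra is an operation obtained from a term by substituting elements of the algebra for some of its variables. An algebra is called Abelian if for every polynomial operation $t(x,y_1,\ldots,y_n)$ and all elements $u,v,c_1,\ldots,c_n,d_1,\ldots,d_n$ of the algebra, $t(u,c_1,\ldots,c_n)=t(u,d_1,\ldots,d_n)$ implies $t(v,c_1,\ldots,c_n)=t(v,d_1,\ldots,d_n)$. An algebra is called Hamiltonian if the universe of every subalgebra is an equivalence class (block) of some congruence of the algebra. *)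

(* Defs.v *)
From mathcomp Require Import all_boot.
Set Implicit Arguments. Unset Strict Implicit. Unset Printing Implicit Defensive.

(* Terms of the language of groupoids with constants from A (polynomials):
   variables are indexed by nat, constants are elements of A. *)
Inductive pterm (A : Type) : Type :=
| PVar : nat -> pterm A
| PConst : A -> pterm A
| PApp : pterm A -> pterm A -> pterm A.

Fixpoint peval (A : Type) (op : A -> A -> A) (e : nat -> A) (t : pterm A) : A :=
  match t with
  | PVar i => e i
  | PConst a => a
  | PApp t1 t2 => op (peval op e t1) (peval op e t2)
  end.

(* environment: variable 0 is x := u, variable i.+1 is y_(i+1) := c i *)
Definition env0 (A : Type) (u : A) (c : nat -> A) : nat -> A :=
  fun i => match i with 0 => u | j.+1 => c j end.

Definition is_identity (A : Type) (op : A -> A -> A) (one : A) : Prop :=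
  forall a, op one a = a /\ op a one = a.

Definition abelian_alg (A : Type) (op : A -> A -> A) : Prop :=
  forall (t : pterm A) (u v : A) (c d : nat -> A),
    peval op (env0 u c) t = peval op (env0 u d) t ->
    peval op (env0 v c) t = peval op (env0 v d) t.

Definition is_subalgebra (A : finType) (op : A -> A -> A) (S : {set A}) : Prop :=
  S != set0 /\ forall a b, a \in S -> b \in S -> op a b \in S.

Definition is_congruence (A : Type) (op : A -> A -> A) (R : A -> A -> Prop) : Prop :=
  (forall a, R a a) /\ (forall a b, R a b -> R b a) /\
  (forall a b c, R a b -> R b c -> R a c) /\
  (forall a a' b b', R a a' -> R b b' -> R (op a b) (op a' b')).

Definition hamiltonian_alg (A : finType) (op : A -> A -> A) : Prop :=
  forall S : {set A}, is_subalgebra op S ->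
    exists R : A -> A -> Prop, is_congruence op R /\
      exists a : A, forall x : A, x \in S <-> R a x.

(* Main.v *)
Require Import Defs.
From mathcomp Require Import all_boot.

Theorem mainTheorem3 (A : finType) (op : A -> A -> A) (one : A) :
  is_identity op one -> abelian_alg op -> hamiltonian_alg op.
Proof.
move=> hid hab.
have l1 a : op one a = a by case: (hid a).
have r1 a : op a one = a by case: (hid a).
pose f2 (a b : A) : nat -> A := fun i => if i is 0 then a else b.
have E1 a v b : op (op a v) b = op (op a b) v.
  have := hab (PApp (PApp (PVar A 1) (PVar A 0)) (PVar A 2)) one v
    (f2 a b) (f2 (op a b) one) => /=.
  rewrite !r1; exact.
have E2 a v b : op a (op v b) = op (op a b) v.
  have := hab (PApp (PVar A 1) (PApp (PVar A 0) (PVar A 2))) one v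
    (f2 a b) (f2 (op a b) one) => /=.
  rewrite l1 !r1; exact.
have C a b : op a b = op b a by have := E1 one a b; rewrite !l1.
have As a b c : op (op a b) c = op a (op b c) by rewrite E1 E2.
have canr s y y' : op y s = op y' s -> y = y'.
  move=> h.
  have := hab (PApp (PVar A 1) (PVar A 0)) s one (fun _ => y) (fun _ => y') => /=.
  rewrite !r1; exact.
move=> S [SN Sc].
exists (fun a b => exists s s', [/\ s \in S, s' \in S & op a s = op b s']).
split.
  split.
    move=> a; case/set0Pn: SN => s0 Hs0; by exists s0, s0.
  split.
    by move=> a b [s [s' [H1 H2 H3]]]; exists s', s.
  split.
    move=> a b c [s1 [s2 [H1 H2 H3]]] [s3 [s4 [H4 H5 H6]]].
    exists (op s1 s3), (op s4 s2); split; try by apply: Sc.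
    by rewrite -As H3 E1 H6 As.
  move=> a a' b b' [s [s' [H1 H2 H3]]] [t [t' [H4 H5 H6]]].
  exists (op s t), (op s' t'); split; try by apply: Sc.
  by rewrite -As (E1 a b s) (As _ b) H3 H6 -(As _ b') -(E1 a' b' s') As.
exists one => x; split.
  move=> Hx; case/set0Pn: SN => s0 Hs0.
  by exists (op x s0), s0; split; [apply: Sc | | rewrite l1].
move=> [s [s' [H1 H2 H3]]].
rewrite l1 in H3.
have inj : {in S &, injective (fun y => op y s')}.
  by move=> y y' _ _; apply: canr.
have sub : (fun y => op y s') @: S \subset S.
  by apply/subsetP => z /imsetP [y Hy ->]; apply: Sc.
have eqS : (fun y => op y s') @: S = S.
  apply/eqP; rewrite eqEcard sub /= card_in_imset //.
have : s \in (fun y => op y s') @: S by rewrite eqS.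
case/imsetP => y Hy Hsy.
by have -> : x = y by apply: (canr s'); rewrite -H3.
Qed.
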